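(* Let $L_1,L_2$ be disjoint first-order languages without function symbols, each containing at least one constant symbol, let $T_1,T_2$ be an $L_1$-theory and an $L_2$-theory, and let $T_{\mathrm{sim}}$ be the theory of simple products of $T_1$ and $T_2$. Let $\mathcal N$ be a monster model of $T_{\mathrm{sim}}$, identified with the standard simple product of a model $\mathcal M_1=(M_1,\ldots)$ of $T_1$ and a model $\mathcal M_2=(M_2,\ldots)$ of $T_2$, so that $N=M_1\times M_2$, and let $\pi_k:N\to M_k$ be the projections. Let $A\subseteq N$ be small and $A_k=\pi_k(A)$. Let $(a_i)_{i\in I}$ and $(b_i)_{i\in I}$ be sequences of elements of $M_1$ and $M_2$ respectively, indexed by a linearly ordered set $I$. Then the sequence $((a_i,b_i))_{i\in I}$ is $A$-indiscernible in $\mathcal N$ if and only if $(a_i)_{i\in I}$ is $A_1$-indiscernible in $\mathcal M_1$ and $(b_i)_{i\in I}$ is $A_2$-indiscernible in $\mathcal M_2$.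
   Context: Language of simple product $L_{\mathrm{sim}}$: constant symbols $C_{(c_1,c_2)}$ for each pair of constants $c_1\in L_1$, $c_2\in L_2$; predicate symbols: those of $L_1$, those of $L_2$, and binary $\sim_1,\sim_2$. $T_\times$ states: $\sim_1,\sim_2$ are equivalence relations; $\forall x\forall y((x\sim_1y)\wedge(x\sim_2y)\to x=y)$; $\forall x\forall y\exists z((x\sim_1z)\wedge(y\sim_2z))$. Standard conversion $\widetilde\phi$ of an $L_k$-formula $\phi$: rewrite atomic formulas with constants as $\exists\bar y(R(\bar y)\wedge\bigwedge t_i=y_i)$; equality of variables $x=y$ becomes $x\sim_k y$; equality with a constant $c\in L_k$ uses $\sim_k$ and $C_{(c,d)}$ (if $k=1$) or $C_{(d,c)}$ (if $k=2$), $d$ a fixed constant of the other language; $R\in L_k$ atomic formulas unchanged; commutes with Boolean connectives and $\exists$. $T_{\mathrm{sim}}$: $T_\times$, all $\widetilde\sigma$ for $\sigma\in T_1\cup T_2$, and for each $k$ and $R\in L_k$, $\forall\bar x\forall\bar y((\bar x\sim_k\bar y)\to(R(\bar x)\leftrightarrow R(\bar y)))$. Standard simple product of $\mathcal M_1,\mathcal M_2$: universe $M_1\times M_2$, $C_{(c_1,c_2)}\mapsto(c_1^{\mathcal M_1},c_2^{\mathcal M_2})$, $x\sim_k y$ iff $\pi_k(x)=\pi_k(y)$, and $R\in L_k$ holds of $\bar c$ iff $\mathcal M_k\models R(\pi_k(\bar c))$. A sequence $(a_i)_{i\in I}$ in a structure is $A$-indiscernible if for every $n$, all $i_1<\cdots<i_n$,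 $j_1<\cdots<j_n$ in $I$ and every formula $\phi(x_1,\ldots,x_n)$ with parameters from $A$, $\phi(a_{i_1},\ldots,a_{i_n})\leftrightarrow\phi(a_{j_1},\ldots,a_{j_n})$ holds. *)

(* Defs.v *)
From mathcomp Require Import all_boot.
Set Warnings "-notation-overridden".
Set Implicit Arguments. Unset Strict Implicit. Unset Printing Implicit Defensive.

Record language := Language {
  lcon : Type;
  lrel : Type;
  larity : lrel -> nat }.

Record structure (L : language) := mkStructure {
  sdom : Type;
  scon : lcon L -> sdom;
  srel : forall r : lrel L, ('I_(larity r) -> sdom) -> Prop }.
Arguments sdom {L}. Arguments scon {L}. Arguments srel {L} s r.

Inductive term (L : language) (P : Type) : Type :=
  | TVar : nat -> term L P
  | TCon : lcon L -> term L P
  | TPar : P -> term L P.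

Inductive formula (L : language) (P : Type) : Type :=
  | FRel : forall r : lrel L, ('I_(larity r) -> term L P) -> formula L P
  | FEq : term L P -> term L P -> formula L P
  | FNot : formula L P -> formula L P
  | FAnd : formula L P -> formula L P -> formula L P
  | FEx : nat -> formula L P -> formula L P.

Arguments TVar {L P}. Arguments TCon {L P}. Arguments TPar {L P}.
Arguments FRel {L P}. Arguments FEq {L P}. Arguments FNot {L P}.
Arguments FAnd {L P}. Arguments FEx {L P}.

Definition eval_term (L : language) (P : Type) (M : structure L)
  (pe : P -> sdom M) (v : nat -> sdom M) (t : term L P) : sdom M :=
  match t with
  | TVar n => v n
  | TCon c => scon M c
  | TPar a => pe a
  end.

Fixpoint sat (L : language) (P : Type) (M : structure L)
  (pe : P -> sdom M) (v : nat -> sdom M) (f : formula L P) : Prop :=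
  match f with
  | FRel r ts => srel M r (fun k => eval_term pe v (ts k))
  | FEq t1 t2 => eval_term pe v t1 = eval_term pe v t2
  | FNot g => ~ sat pe v g
  | FAnd g h => sat pe v g /\ sat pe v h
  | FEx n g => exists x : sdom M,
      sat pe (fun m => if m == n then x else v m) g
  end.

Definition term_fv_in (L : language) (P : Type) (S : nat -> Prop)
  (t : term L P) : Prop :=
  match t with TVar n => S n | _ => True end.

Fixpoint fv_in (L : language) (P : Type) (S : nat -> Prop)
  (f : formula L P) : Prop :=
  match f with
  | FRel r ts => forall k, term_fv_in S (ts k)
  | FEq t1 t2 => term_fv_in S t1 /\ term_fv_in S t2
  | FNot g => fv_in S g
  | FAnd g h => fv_in S g /\ fv_in S h
  | FEx n g => fv_in (fun m => m = n \/ S m) g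
  end.

Definition theory (L : language) := formula L Empty_set -> Prop.

Definition no_params (X : Type) (e : Empty_set) : X := match e with end.

Definition models (L : language) (M : structure L) (T : theory L) : Prop :=
  forall phi, T phi -> forall v : nat -> sdom M, sat (@no_params (sdom M)) v phi.

Definition strict_linear_order (I : Type) (lt : I -> I -> Prop) : Prop :=
  (forall x, ~ lt x x) /\
  (forall x y z, lt x y -> lt y z -> lt x z) /\
  (forall x y, x <> y -> lt x y \/ lt y x).

Definition increasing_upto (I : Type) (lt : I -> I -> Prop) (n : nat)
  (i : nat -> I) : Prop :=
  forall k l, k < l < n -> lt (i k) (i l).

Definition indiscernible (L : language) (M : structure L)
  (B : sdom M -> Prop) (I : Type) (lt : I -> I -> Prop) (a : I -> sdom M) : Prop :=
  forall (n : nat) (i j : nat -> I),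
    increasing_upto lt n i -> increasing_upto lt n j ->
    forall phi : formula L {x : sdom M | B x},
      fv_in (fun m => m < n) phi ->
      (sat (@proj1_sig _ _) (fun k => a (i k)) phi <->
       sat (@proj1_sig _ _) (fun k => a (j k)) phi).

(* The language L_sim of simple products: constants C_(c1,c2), the predicate
   symbols of L1 and of L2 (disjoint union), and binary ~1 (true), ~2 (false). *)
Definition sim_arity (L1 L2 : language) (r : (lrel L1 + lrel L2) + bool) : nat :=
  match r with
  | inl (inl p) => larity p
  | inl (inr p) => larity p
  | inr _ => 2
  end.

Definition sim_language (L1 L2 : language) : language :=
  @Language (lcon L1 * lcon L2)%type _ (@sim_arity L1 L2).

Definition sim_rel (L1 L2 : language) (M1 : structure L1) (M2 : structure L2)
  (r : lrel (sim_language L1 L2)) :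
  ('I_(larity r) -> (sdom M1 * sdom M2)%type) -> Prop :=
  match r with
  | inl (inl p) => fun args => srel M1 p (fun k => (args k).1)
  | inl (inr p) => fun args => srel M2 p (fun k => (args k).2)
  | inr true => fun args => (args (@ord0 1)).1 = (args (@ord_max 1)).1
  | inr false => fun args => (args (@ord0 1)).2 = (args (@ord_max 1)).2
  end.

Definition sim_product (L1 L2 : language) (M1 : structure L1) (M2 : structure L2)
  : structure (sim_language L1 L2) :=
  @mkStructure (sim_language L1 L2) (sdom M1 * sdom M2)%type
    (fun c => (scon M1 c.1, scon M2 c.2)) (@sim_rel L1 L2 M1 M2).

Definition proj_set1 (X Y : Type) (A : (X * Y)%type -> Prop) : X -> Prop :=
  fun x => exists y, A y /\ y.1 = x.
Definition proj_set2 (X Y : Type) (A : (X * Y)%type -> Prop) : Y -> Prop :=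
  fun x => exists y, A y /\ y.2 = x.
Arguments indiscernible {L} M B {I} lt a.

(* Main.v *)
Require Import Defs.
From mathcomp Require Import all_boot.
From Stdlib Require Import Classical FunctionalExtensionality ClassicalEpsilon.
From mathcomp Require Import all_boot.
Set Implicit Arguments. Unset Strict Implicit.

Section Dec.
Variables (L1 L2 : language) (M1 : structure L1) (M2 : structure L2).
Variable A : sdom (sim_product M1 M2) -> Prop.
Definition LS := sim_language L1 L2.
Definition P := {x : sdom (sim_product M1 M2) | A x}.
Definition P1 := {x : sdom M1 | proj_set1 A x}.
Definition P2 := {x : sdom M2 | proj_set2 A x}.

Definition p1 (p : P) : P1 := exist _ (proj1_sig p).1 (ex_intro _ (proj1_sig p) (conj (proj2_sig p) erefl)).
Definition p2 (p : P) : P2 := exist _ (proj1_sig p).2 (ex_intro _ (proj1_sig p) (conj (proj2_sig p) erefl)).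

Definition tr1 (t : term LS P) : term L1 P1 :=
  match t with TVar n => TVar n | TCon c => TCon c.1 | TPar p => TPar (p1 p) end.
Definition tr2 (t : term LS P) : term L2 P2 :=
  match t with TVar n => TVar n | TCon c => TCon c.2 | TPar p => TPar (p2 p) end.

Definition Ttrue (L : language) (Q : Type) : formula L Q :=
  let X := FEx 0 (FEq (TVar 0) (TVar 0)) in FNot (FAnd X (FNot X)).

Arguments Ttrue : simpl never.
Definition F12 := (formula L1 P1 * formula L2 P2)%type.

Fixpoint dand (l m : seq F12) : seq F12 :=
  match l with [::] => [::]
  | x :: l' => map (fun y => (FAnd x.1 y.1, FAnd x.2 y.2)) m ++ dand l' m end.

Fixpoint dneg (l : seq F12) : seq F12 :=
  match l with [::] => [:: (Ttrue _ _, Ttrue _ _)]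
  | x :: l' => dand [:: (FNot x.1, Ttrue _ _); (Ttrue _ _, FNot x.2)] (dneg l') end.

Definition decrel (r : lrel LS) : ('I_(larity r) -> term LS P) -> seq F12 :=
  match r as r0 return ('I_(@sim_arity L1 L2 r0) -> term LS P) -> seq F12 with
  | inl (inl p) => fun ts => [:: (FRel p (fun k => tr1 (ts k)), Ttrue _ _)]
  | inl (inr p) => fun ts => [:: (Ttrue _ _, FRel p (fun k => tr2 (ts k)))]
  | inr true => fun ts => [:: (FEq (tr1 (ts ord0)) (tr1 (ts ord_max)), Ttrue _ _)]
  | inr false => fun ts => [:: (Ttrue _ _, FEq (tr2 (ts ord0)) (tr2 (ts ord_max)))]
  end.

Fixpoint dec (f : formula LS P) : seq F12 :=
  match f with
  | FRel r ts => decrel ts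
  | FEq t1 t2 => [:: (FEq (tr1 t1) (tr1 t2), FEq (tr2 t1) (tr2 t2))]
  | FNot g => dneg (dec g)
  | FAnd g h => dand (dec g) (dec h)
  | FEx n g => map (fun x => (FEx n x.1, FEx n x.2)) (dec g)
  end.

Fixpoint dsat (l : seq F12) (v1 : nat -> sdom M1) (v2 : nat -> sdom M2) : Prop :=
  match l with [::] => False
  | x :: l' => (@sat _ _ M1 (@proj1_sig _ _) v1 x.1 /\ @sat _ _ M2 (@proj1_sig _ _) v2 x.2)
               \/ dsat l' v1 v2 end.

Fixpoint dfv (S : nat -> Prop) (l : seq F12) : Prop :=
  match l with [::] => True
  | x :: l' => (fv_in S x.1 /\ fv_in S x.2) /\ dfv S l' end.

Lemma Ttrue_sat L Q (M : structure L) pe v : @sat L Q M pe v (Ttrue _ _).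
Proof. by rewrite /Ttrue /= => [] [] H; apply. Qed.

Lemma Ttrue_fv L Q S : fv_in S (Ttrue L Q).
Proof. by rewrite /Ttrue /=; auto. Qed.

Lemma dsat_cat l m v1 v2 : dsat (l ++ m) v1 v2 <-> dsat l v1 v2 \/ dsat m v1 v2.
Proof. elim: l => [|x l IH] /=; [tauto|rewrite IH; tauto]. Qed.

Lemma dfv_cat S l m : dfv S (l ++ m) <-> dfv S l /\ dfv S m.
Proof. elim: l => [|x l IH] /=; [tauto|rewrite IH; tauto]. Qed.

Lemma dsat_and l m v1 v2 : dsat (dand l m) v1 v2 <-> dsat l v1 v2 /\ dsat m v1 v2.
Proof.
elim: l => [|x l IH] /=; first tauto.
rewrite dsat_cat IH.
suff -> : dsat [seq (FAnd x.1 y.1, FAnd x.2 y.2) | y <- m] v1 v2 <->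
  ((sat (@proj1_sig _ _) v1 x.1 /\ sat (@proj1_sig _ _) v2 x.2) /\ dsat m v1 v2) by tauto.
clear IH; elim: m => [|y m IHm] /=; [tauto|rewrite IHm; tauto].
Qed.

Lemma dfv_and S l m : dfv S l -> dfv S m -> dfv S (dand l m).
Proof.
elim: l => [|x l IH] //= [[H1 H2] Hl] Hm; apply/dfv_cat; split; last exact: IH.
clear IH; elim: m Hm => [|y m IHm] //= [[H3 H4] Hm]; tauto.
Qed.

Lemma dsat_neg l v1 v2 : dsat (dneg l) v1 v2 <-> ~ dsat l v1 v2.
Proof.
elim: l => [|x l IH].
  split=> [_|_]; [by []|left; split; exact: Ttrue_sat].
have E : dneg (x :: l) = dand [:: (FNot x.1, Ttrue _ _); (Ttrue _ _, FNot x.2)] (dneg l) := erefl.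
rewrite E dsat_and IH /=.
have T1 := @Ttrue_sat _ _ M1 (@proj1_sig _ _) v1.
have T2 := @Ttrue_sat _ _ M2 (@proj1_sig _ _) v2.
split.
  move=> [H1 H2] [H|H]; last tauto. tauto.
move=> H; split; last tauto.
destruct (classic (sat (@proj1_sig _ _) v1 x.1)); tauto.
Qed.

Lemma dfv_neg S l : dfv S l -> dfv S (dneg l).
Proof.
elim: l => [|x l IH]; first by move=> _; split; [split; apply: Ttrue_fv|].
move=> [[H1 H2] Hl]; apply: dfv_and; last exact: IH.
split; [split; [exact H1|exact: Ttrue_fv]|].
split; [split; [exact: Ttrue_fv|exact H2]|done].
Qed.

Lemma tr1_eval v t : eval_term (@proj1_sig _ _) (fun m => (v m).1) (tr1 t) =
  (@eval_term LS P (sim_product M1 M2) (@proj1_sig _ _) v t).1.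
Proof. by case: t. Qed.
Lemma tr2_eval v t : eval_term (@proj1_sig _ _) (fun m => (v m).2) (tr2 t) =
  (@eval_term LS P (sim_product M1 M2) (@proj1_sig _ _) v t).2.
Proof. by case: t. Qed.

Lemma tr1_fv S t : term_fv_in S t -> term_fv_in S (tr1 t).
Proof. by case: t. Qed.
Lemma tr2_fv S t : term_fv_in S t -> term_fv_in S (tr2 t).
Proof. by case: t. Qed.

Lemma dec_sat f v : @sat LS P (sim_product M1 M2) (@proj1_sig _ _) v f <->
  dsat (dec f) (fun m => (v m).1) (fun m => (v m).2).
Proof.
elim: f v => [r ts|t1 t2|g IH|g IHg h IHh|n g IH] v /=.
- have T1 := @Ttrue_sat _ _ M1 (@proj1_sig _ _) (fun m => (v m).1).
  have T2 := @Ttrue_sat _ _ M2 (@proj1_sig _ _) (fun m => (v m).2).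
  case: r ts => [[p|p]|[]] ts /=.
  + have -> : (fun k => eval_term (@proj1_sig _ _) (fun m => (v m).1) (tr1 (ts k))) =
             (fun k => (eval_term (@proj1_sig _ _) v (ts k)).1)
      by apply: functional_extensionality => k; rewrite tr1_eval.
    tauto.
  + have -> : (fun k => eval_term (@proj1_sig _ _) (fun m => (v m).2) (tr2 (ts k))) =
             (fun k => (eval_term (@proj1_sig _ _) v (ts k)).2)
      by apply: functional_extensionality => k; rewrite tr2_eval.
    tauto.
  + rewrite !tr1_eval; tauto.
  + rewrite !tr2_eval; tauto.
- rewrite !tr1_eval !tr2_eval.
  case: (eval_term _ v t1) => x1 x2; case: (eval_term _ v t2) => y1 y2 /=.
  split; first by case=> -> ->; tauto.
  by case; [case=> -> ->|].
- by rewrite dsat_neg IH.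
- by rewrite dsat_and IHg IHh.
- have E : forall (x : sdom M1 * sdom M2),
    @sat LS P (sim_product M1 M2) (@proj1_sig _ _) (fun m => if m == n then x else v m) g <->
    dsat (dec g) (fun m => if m == n then x.1 else (v m).1)
                 (fun m => if m == n then x.2 else (v m).2).
    move=> x; rewrite IH.
    have -> : (fun m => (if m == n then x else v m).1) = (fun m => if m == n then x.1 else (v m).1)
      by apply: functional_extensionality => m; case: (m == n).
    have -> : (fun m => (if m == n then x else v m).2) = (fun m => if m == n then x.2 else (v m).2)
      by apply: functional_extensionality => m; case: (m == n).
    done.
  have -> : (exists x : sdom M1 * sdom M2, @sat LS P (sim_product M1 M2) (@proj1_sig _ _) (fun m => if m == n then x else v m) g) <->
     exists x : sdom M1 * sdom M2, dsat (dec g) (fun m => if m == n then x.1 else (v m).1)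
                 (fun m => if m == n then x.2 else (v m).2).
    by split; case=> x /E; exists x.
  clear E IH; elim: (dec g) => [|y l IHl] /=.
    by split; [case|].
  rewrite -IHl; split.
    case=> x [[H1 H2]|H]; [left; split; [exists x.1|exists x.2] | right; exists x]; done.
  case=> [[[x1 H1] [x2 H2]]|[x H]]; [exists (x1,x2); left | exists x; right]; done.
Qed.

Lemma dec_fv f S : fv_in S f -> dfv S (dec f).
Proof.
elim: f S => [r ts|t1 t2|g IH|g IHg h IHh|n g IH] S /=.
- case: r ts => [[p|p]|[]] ts /= H; repeat split; try (move=> k); auto using tr1_fv, tr2_fv.
- by case=> H1 H2; repeat split; apply: tr1_fv || apply: tr2_fv.
- by move=> H; apply: dfv_neg; apply: IH.
- by case=> H1 H2; apply: dfv_and; [apply: IHg|apply: IHh].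
- move=> /IH; elim: (dec g) => [|y l IHl] //= [[H1 H2] H]; tauto.
Qed.


Definition g1 (p : P1) : P :=
  let e := constructive_indefinite_description _ (proj2_sig p) in
  exist _ (proj1_sig e) (proj1 (proj2_sig e)).
Lemma g1P p : (proj1_sig (g1 p)).1 = proj1_sig p.
Proof. by rewrite /g1 /=; case: (constructive_indefinite_description _ _) => y [? ->]. Qed.
Definition g2 (p : P2) : P :=
  let e := constructive_indefinite_description _ (proj2_sig p) in
  exist _ (proj1_sig e) (proj1 (proj2_sig e)).
Lemma g2P p : (proj1_sig (g2 p)).2 = proj1_sig p.
Proof. by rewrite /g2 /=; case: (constructive_indefinite_description _ _) => y [? ->]. Qed.

Section Em1.
Variable d2 : lcon L2.
Definition em1t (t : term L1 P1) : term LS P :=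
  match t with TVar n => TVar n | TCon c => @TCon LS P (c, d2) | TPar p => TPar (g1 p) end.
Fixpoint em1 (f : formula L1 P1) : formula LS P :=
  match f with
  | FRel r ts => @FRel LS P (inl (inl r)) (fun k => em1t (ts k))
  | FEq t1 t2 => @FRel LS P (inr true) (fun k : 'I_2 => if val k == 0 then em1t t1 else em1t t2)
  | FNot g => FNot (em1 g)
  | FAnd g h => FAnd (em1 g) (em1 h)
  | FEx n g => FEx n (em1 g)
  end.
Lemma em1t_eval v t : (@eval_term LS P (sim_product M1 M2) (@proj1_sig _ _) v (em1t t)).1 =
   eval_term (@proj1_sig _ _) (fun m => (v m).1) t.
Proof. by case: t => //= p; rewrite g1P. Qed.
Lemma em1t_fv S t : term_fv_in S t -> term_fv_in S (em1t t).
Proof. by case: t. Qed.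
Lemma em1_fv S f : fv_in S f -> fv_in S (em1 f).
Proof.
elim: f S => [r ts|t1 t2|g IH|g IHg h IHh|n g IH] S /=.
- by move=> H k; apply: em1t_fv.
- by case=> H1 H2 k; case: (val k == 0); apply: em1t_fv.
- exact: IH.
- by case=> ??; split; [apply: IHg|apply: IHh].
- exact: IH.
Qed.
Lemma em1_sat f v : @sat LS P (sim_product M1 M2) (@proj1_sig _ _) v (em1 f) <->
  sat (@proj1_sig _ _) (fun m => (v m).1) f.
Proof.
elim: f v => [r ts|t1 t2|g IH|g IHg h IHh|n g IH] v /=.
- have -> : (fun k => (eval_term (@proj1_sig _ _) v (em1t (ts k))).1) =
            (fun k => eval_term (@proj1_sig _ _) (fun m => (v m).1) (ts k))
    by apply: functional_extensionality => k; rewrite em1t_eval.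
  done.
- by rewrite !em1t_eval.
- by rewrite IH.
- by rewrite IHg IHh.
- have E : forall x : sdom M1 * sdom M2,
    @sat LS P (sim_product M1 M2) (@proj1_sig _ _) (fun m => if m == n then x else v m) (em1 g) <->
    sat (@proj1_sig _ _) (fun m => if m == n then x.1 else (v m).1) g.
    move=> x; rewrite IH.
    have -> : (fun m => (if m == n then x else v m).1) = (fun m => if m == n then x.1 else (v m).1)
      by apply: functional_extensionality => m; case: (m == n).
    done.
  split; first by case=> x /E H; exists x.1.
  by case=> x H; exists (x, scon M2 d2); apply/E.
Qed.
End Em1.

Section Em2.
Variable d1 : lcon L1.
Definition em2t (t : term L2 P2) : term LS P :=
  match t with TVar n => TVar n | TCon c => @TCon LS P (d1, c) | TPar p => TPar (g2 p) end.
Fixpoint em2 (f : formula L2 P2) : formula LS P :=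
  match f with
  | FRel r ts => @FRel LS P (inl (inr r)) (fun k => em2t (ts k))
  | FEq t1 t2 => @FRel LS P (inr false) (fun k : 'I_2 => if val k == 0 then em2t t1 else em2t t2)
  | FNot g => FNot (em2 g)
  | FAnd g h => FAnd (em2 g) (em2 h)
  | FEx n g => FEx n (em2 g)
  end.
Lemma em2t_eval v t : (@eval_term LS P (sim_product M1 M2) (@proj1_sig _ _) v (em2t t)).2 =
   eval_term (@proj1_sig _ _) (fun m => (v m).2) t.
Proof. by case: t => //= p; rewrite g2P. Qed.
Lemma em2t_fv S t : term_fv_in S t -> term_fv_in S (em2t t).
Proof. by case: t. Qed.
Lemma em2_fv S f : fv_in S f -> fv_in S (em2 f).
Proof.
elim: f S => [r ts|t1 t2|g IH|g IHg h IHh|n g IH] S /=.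
- by move=> H k; apply: em2t_fv.
- by case=> H1 H2 k; case: (val k == 0); apply: em2t_fv.
- exact: IH.
- by case=> ??; split; [apply: IHg|apply: IHh].
- exact: IH.
Qed.
Lemma em2_sat f v : @sat LS P (sim_product M1 M2) (@proj1_sig _ _) v (em2 f) <->
  sat (@proj1_sig _ _) (fun m => (v m).2) f.
Proof.
elim: f v => [r ts|t1 t2|g IH|g IHg h IHh|n g IH] v /=.
- have -> : (fun k => (eval_term (@proj1_sig _ _) v (em2t (ts k))).2) =
            (fun k => eval_term (@proj1_sig _ _) (fun m => (v m).2) (ts k))
    by apply: functional_extensionality => k; rewrite em2t_eval.
  done.
- by rewrite !em2t_eval.
- by rewrite IH.
- by rewrite IHg IHh.
- have E : forall x : sdom M1 * sdom M2,
    @sat LS P (sim_product M1 M2) (@proj1_sig _ _) (fun m => if m == n then x else v m) (em2 g) <->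
    sat (@proj1_sig _ _) (fun m => if m == n then x.2 else (v m).2) g.
    move=> x; rewrite IH.
    have -> : (fun m => (if m == n then x else v m).2) = (fun m => if m == n then x.2 else (v m).2)
      by apply: functional_extensionality => m; case: (m == n).
    done.
  split; first by case=> x /E H; exists x.2.
  by case=> x H; exists (scon M1 d1, x); apply/E.
Qed.
End Em2.

End Dec.

Theorem lemma3p4 (L1 L2 : language) (T1 : theory L1) (T2 : theory L2)
  (M1 : structure L1) (M2 : structure L2) :
  inhabited (lcon L1) -> inhabited (lcon L2) ->
  models M1 T1 -> models M2 T2 ->
  forall (A : sdom (sim_product M1 M2) -> Prop)
         (I : Type) (lt : I -> I -> Prop),
    strict_linear_order lt ->
    forall (a : I -> sdom M1) (b : I -> sdom M2),
      indiscernible (sim_product M1 M2) A lt (fun i => (a i, b i)) <->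
      (indiscernible M1 (proj_set1 A) lt a /\
       indiscernible M2 (proj_set2 A) lt b).
Proof.
move=> [d1] [d2] _ _ A I lt _ a b; split.
  move=> H; split=> n i j Hi Hj phi Hfv.
    move: (H n i j Hi Hj (em1 d2 phi) (em1_fv d2 Hfv)).
    by rewrite !em1_sat.
  move: (H n i j Hi Hj (em2 d1 phi) (em2_fv d1 Hfv)).
  by rewrite !em2_sat.
case=> H1 H2 n i j Hi Hj phi Hfv.
rewrite !dec_sat.
move: (dec phi) (dec_fv Hfv) => l; elim: l => [|x l IH] //= [[Hf1 Hf2] Hl].
by rewrite (H1 n i j Hi Hj _ Hf1) (H2 n i j Hi Hj _ Hf2) IH.
Qed.
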